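(* Let $\Sigma(B)\subset\Sigma(C)\subset(\mathbb{N}^* )^{\mathbb{Z}}$ be two transitive and symmetric subshifts of finite type. Let $x\in\mathbb{R}$ be such that $m(\beta)\le x$ for all $\beta\in\Sigma(B)$. Suppose that $\gamma\in\Sigma(C)$ satisfies $m(\gamma)=\lambda_0(\gamma)=m>x$ and that $\gamma$ connects both positively and negatively to $B$. Then $m\in L$.
   Context: $\mathbb{N}^*$ denotes the positive integers. For $\underline a=(a_n)_{n\in\mathbb{Z}}\in(\mathbb{N}^* )^{\mathbb{Z}}$: $\lambda_0(\underline a)=[a_0;a_1,a_2,\dots]+[0;a_{-1},a_{-2},\dots]$; $\sigma$ is the left shift; $m(\underline a)=\sup_{n\in\mathbb{Z}}\lambda_0(\sigma^n\underline a)$ (Markov value), $\ell(\underline a)=\limsup_{n\to\infty}\lambda_0(\sigma^n\underline a)$ (Lagrange value); $L=\{\ell(\underline a):\underline a\in(\mathbb{N}^* )^{\mathbb{Z}}\}$ is the Lagrange spectrum. For a subshift $\Sigma(A)\subset(\mathbb{N}^* )^{\mathbb{Z}}$, let $\Sigma^+(A)$ be the set of one-sided sequences $(\theta_1,\theta_2,\dots)$ with $(\theta_n)_{n\in\mathbb{Z}}\in\Sigma(A)$, $K(A)=\{[0;\theta_1,\theta_2,\dots]:(\theta_n)\in\Sigma(A)\}$ and $K^-(A)=\{[0;\theta_{-1},\theta_{-2},\dots]:(\theta_n)\in\Sigma(A)\}$; the subshift is called symmetric if $K(A)=K^-(A)$. A sequence $\alpha\in\Sigma(C)$ with $m(\alpha)=\lambda_0(\alpha)$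 connects positively to $B$ if for every $k\in\mathbb{N}$ there exist a finite word $\tau$ and $\upsilon\in\Sigma^+(B)$ such that the bi-infinite sequence $\tilde\alpha:=\dots\alpha_{-2}\alpha_{-1}\alpha_0\dots\alpha_k\tau\upsilon$ (which agrees with $\alpha$ at indices $\le k$ and is followed by $\tau$ and then $\upsilon$) satisfies $m(\tilde\alpha)<m(\alpha)+2^{-k}$. It connects negatively to $B$ if the reversed sequence $\alpha^t=(\alpha_{-n})_{n\in\mathbb{Z}}$ connects positively to $B$. *)

(* Defs.v *)
From Stdlib Require Import Reals ZArith List Lia.
From Coquelicot Require Import Coquelicot.
Open Scope R_scope.

(** Bi-infinite sequences of naturals (indexed by Z); membership in
    (N^* )^Z is the predicate [pos_seq]. *)
Definition bseq := Z -> nat.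
Definition pos_seq (a : bseq) : Prop := forall n, (1 <= a n)%nat.

Fixpoint cf_fin (n : nat) (f : nat -> nat) : R :=
  match n with
  | O => INR (f O)
  | S n' => INR (f O) + / cf_fin n' (fun k => f (S k))
  end.

Definition cf (f : nat -> nat) : R := real (Lim_seq (fun n => cf_fin n f)).

Definition cf0 (g : nat -> nat) : R :=
  cf (fun k => match k with O => O | S k' => g k' end).

Definition lambda0 (a : bseq) : R :=
  cf (fun k => a (Z.of_nat k)) + cf0 (fun k => a (- Z.of_nat (S k))%Z).

Definition shiftn (n : Z) (a : bseq) : bseq := fun k => a (k + n)%Z.

Definition markov (a : bseq) : Rbar :=
  Lub_Rbar (fun r => exists n : Z, r = lambda0 (shiftn n a)).

Definition lagrange (a : bseq) : Rbar :=
  LimSup_seq (fun n : nat => lambda0 (shiftn (Z.of_nat n) a)).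

Definition Lspec (r : R) : Prop := exists a : bseq, pos_seq a /\ lagrange a = Finite r.

(** Subshift of finite type Sigma(A): a finite alphabet of positive integers
    and a 0/1 transition matrix on it. *)
Record SFT := { sft_alph : list nat; sft_trans : nat -> nat -> bool }.

Definition Sigma (A : SFT) (t : bseq) : Prop :=
  forall n : Z, (1 <= t n)%nat /\ In (t n) (sft_alph A) /\
                sft_trans A (t n) (t (n + 1)%Z) = true.

(** Topological transitivity: any two allowed central blocks can be joined
    inside Sigma(A) (the second block appearing after the first). *)
Definition transitive (A : SFT) : Prop :=
  forall t1 t2 : bseq, Sigma A t1 -> Sigma A t2 -> forall k : nat,
    exists t : bseq, exists p : Z,
      Sigma A t /\ (2 * Z.of_nat k < p)%Z /\
      (forall i : Z, (- Z.of_nat k <= i <= Z.of_nat k)%Z -> t i = t1 i) /\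
      (forall i : Z, (- Z.of_nat k <= i <= Z.of_nat k)%Z -> t (i + p)%Z = t2 i).

Definition Kplus (A : SFT) (r : R) : Prop :=
  exists t, Sigma A t /\ r = cf0 (fun k => t (Z.of_nat (S k))).
Definition Kminus (A : SFT) (r : R) : Prop :=
  exists t, Sigma A t /\ r = cf0 (fun k => t (- Z.of_nat (S k))%Z).

Definition symmetric (A : SFT) : Prop := forall r, Kplus A r <-> Kminus A r.

(** Sigma^+(A): one-sided sequences (theta_1, theta_2, ...) (indexed from 0
    here: u j = theta_{j+1}). *)
Definition SigmaPlus (A : SFT) (u : nat -> nat) : Prop :=
  exists t, Sigma A t /\ forall j : nat, u j = t (Z.of_nat (S j)).

(** The sequence ... a_{k-1} a_k tau upsilon. *)
Definition glue (a : bseq) (k : Z) (tau : list nat) (u : nat -> nat) : bseq :=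
  fun n =>
    if (n <=? k)%Z then a n
    else if (n - k <=? Z.of_nat (length tau))%Z
         then nth (Z.to_nat (n - k - 1)) tau O
         else u (Z.to_nat (n - k - 1 - Z.of_nat (length tau))).

(** Positive connection to B (the standing requirement m(a) = lambda0(a)
    of the paper's definition is stated separately in the theorem). *)
Definition connects_pos (a : bseq) (B : SFT) : Prop :=
  forall k : nat, exists (tau : list nat) (u : nat -> nat),
    List.Forall (fun c => (1 <= c)%nat) tau /\ SigmaPlus B u /\
    Rbar_lt (markov (glue a (Z.of_nat k) tau u))
            (Rbar_plus (markov a) (Finite (/ 2 ^ k))).

Definition transpose (a : bseq) : bseq := fun n => a (- n)%Z.

Definition connects_neg (a : bseq) (B : SFT) : Prop :=
  connects_pos (transpose a) B.

(* Main.v *)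
Require Import Defs.
From Stdlib Require Import Reals ZArith List Lia Lra Psatz FunctionalExtensionality IndefiniteDescription.
From Coquelicot Require Import Coquelicot.
Open Scope R_scope.

Definition pos1 (f : nat -> nat) := forall i, (1 <= i)%nat -> (1 <= f i)%nat.
Definition posn (f : nat -> nat) := forall i, (1 <= f i)%nat.

Lemma INR_ge1 n : (1 <= n)%nat -> 1 <= INR n.
Proof. intros; apply (le_INR 1) in H; simpl in H; lra. Qed.

Lemma pos1_tl f : pos1 f -> posn (fun k => f (S k)).
Proof. intros H i; apply H; lia. Qed.
Lemma posn_pos1 f : posn f -> pos1 f.
Proof. intros H i _; apply H. Qed.

Lemma cf_fin_bounds : forall n f, pos1 f -> INR (f O) <= cf_fin n f <= INR (f O) + 1.
Proof.
  induction n; intros f Hf; simpl.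
  - lra.
  - assert (H := IHn (fun k => f (S k)) (posn_pos1 _ (pos1_tl _ Hf))).
    simpl in H. assert (1 <= INR (f 1%nat)) by (apply INR_ge1; apply Hf; lia).
    assert (0 < / cf_fin n (fun k => f (S k)) <= 1).
    { split. apply Rinv_0_lt_compat; lra. rewrite <- Rinv_1. apply Rinv_le_contravar; lra. }
    lra.
Qed.

Lemma cf_fin_ge1 n f : posn f -> 1 <= cf_fin n f.
Proof. intros H; pose proof (cf_fin_bounds n f (posn_pos1 _ H)); pose proof (INR_ge1 _ (H O)); lra. Qed.

Lemma cf_fin_cauchy_aux : forall n, (forall m f, pos1 f -> (n <= m)%nat ->
  Rabs (cf_fin n f - cf_fin m f) <= 2 * (/2)^n) /\ (forall m f, pos1 f -> (S n <= m)%nat ->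
  Rabs (cf_fin (S n) f - cf_fin m f) <= 2 * (/2)^(S n)).
Proof.
  assert (B01 : forall n m f, pos1 f -> Rabs (cf_fin n f - cf_fin m f) <= 1).
  { intros n m f Hf. pose proof (cf_fin_bounds n f Hf); pose proof (cf_fin_bounds m f Hf).
    apply Rabs_le; lra. }
  induction n as [|n IH].
  - split; intros m f Hf Hm. simpl. specialize (B01 O m f Hf); simpl in B01; lra.
    specialize (B01 1%nat m f Hf). simpl pow. lra.
  - split; [apply IH|].
    intros m f Hf Hm. destruct m as [|[|m']]; try lia.
    destruct IH as [IH _].
    set (g := fun k => f (S (S k))).
    assert (Hg : posn g) by (intro i; unfold g; apply Hf; lia).
    specialize (IH m' g (posn_pos1 _ Hg) ltac:(lia)).
    change (cf_fin (S (S n)) f) with (INR (f O) + / (INR (f 1%nat) + / cf_fin n g)).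
    change (cf_fin (S (S m')) f) with (INR (f O) + / (INR (f 1%nat) + / cf_fin m' g)).
    pose proof (cf_fin_ge1 n g Hg) as HX. pose proof (cf_fin_ge1 m' g Hg) as HY.
    set (X := cf_fin n g) in *. set (Y := cf_fin m' g) in *.
    assert (Hp : 1 <= INR (f 1%nat)) by (apply INR_ge1; apply Hf; lia).
    set (p := INR (f 1%nat)) in *.
    replace (INR (f O) + / (p + / X) - (INR (f O) + / (p + / Y)))
      with ((X - Y) * / ((p * X + 1) * (p * Y + 1))).
    2:{ field. repeat split; try nra. }
    rewrite Rabs_mult, (Rabs_pos_eq (/ _)).
    2:{ apply Rlt_le; apply Rinv_0_lt_compat; apply Rmult_lt_0_compat; nra. }
    assert (/ ((p * X + 1) * (p * Y + 1)) <= / 4).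
    { apply Rinv_le_contravar. lra. assert (2 <= p*X+1) by nra. assert (2 <= p*Y+1) by nra. nra. }
    pose proof (Rabs_pos (X - Y)).
    apply Rle_trans with (Rabs (X - Y) * / 4). apply Rmult_le_compat_l; lra.
    simpl pow. simpl pow in IH. lra.
Qed.

Lemma cf_fin_cauchy n m f : pos1 f -> (n <= m)%nat ->
  Rabs (cf_fin n f - cf_fin m f) <= 2 * (/2)^n.
Proof. intros; apply (proj1 (cf_fin_cauchy_aux n)); auto. Qed.

Lemma half_pow_small y : 0 < y -> exists N, forall n, (N <= n)%nat -> (/2)^n < y.
Proof.
  intros Hy. destruct (pow_lt_1_zero (/2) ltac:(rewrite Rabs_pos_eq; lra) y Hy) as [N HN].
  exists N; intros n Hn. specialize (HN n Hn). rewrite Rabs_pos_eq in HN; auto.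
  apply pow_le; lra.
Qed.

Lemma half_pow_pos n : 0 < (/2)^n.
Proof. apply pow_lt; lra. Qed.

Lemma half_pow_decr n n' : (n <= n')%nat -> (/2)^n' <= (/2)^n.
Proof.
  induction 1. lra. simpl. pose proof (half_pow_pos m). lra.
Qed.

Lemma cf_fin_cv f : pos1 f -> is_lim_seq (fun n => cf_fin n f) (cf f).
Proof.
  intros Hf.
  assert (Hex : ex_finite_lim_seq (fun n => cf_fin n f)).
  { apply ex_lim_seq_cauchy_corr. intros eps.
    destruct (half_pow_small (eps / 2)) as [N HN]. destruct eps; simpl; lra.
    exists N. intros n m Hn Hm.
    destruct (le_ge_dec n m).
    - pose proof (cf_fin_cauchy n m f Hf l). specialize (HN n Hn). lra.
    - pose proof (cf_fin_cauchy m n f Hf g). specialize (HN m Hm).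
      rewrite Rabs_minus_sym. lra. }
  destruct Hex as [l Hl]. unfold cf. rewrite (is_lim_seq_unique _ _ Hl). exact Hl.
Qed.

Lemma lim_bounds u (l : R) a b N : is_lim_seq u l -> (forall n, (N <= n)%nat -> a <= u n <= b) -> a <= l <= b.
Proof.
  intros Hl Hb. split.
  - assert (H := is_lim_seq_le_loc (fun _ => a) u a l). simpl in H. apply H.
    exists N; intros; apply Hb; auto. apply is_lim_seq_const. auto.
  - assert (H := is_lim_seq_le_loc u (fun _ => b) l b). simpl in H. apply H.
    exists N; intros; apply Hb; auto. auto. apply is_lim_seq_const.
Qed.

Lemma cf_approx f n : pos1 f -> Rabs (cf f - cf_fin n f) <= 2 * (/2)^n.
Proof.
  intros Hf. apply Rabs_le.
  assert (cf_fin n f - 2 * (/2)^n <= cf f <= cf_fin n f + 2 * (/2)^n).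
  { apply (lim_bounds _ _ _ _ n (cf_fin_cv f Hf)). intros k Hk.
    pose proof (cf_fin_cauchy n k f Hf Hk). apply Rabs_le_between in H. lra. }
  lra.
Qed.

Lemma cf_bounds f : pos1 f -> INR (f O) <= cf f <= INR (f O) + 1.
Proof.
  intros Hf. apply (lim_bounds _ _ _ _ O (cf_fin_cv f Hf)). intros; apply cf_fin_bounds; auto.
Qed.

Lemma cf_ge1 f : posn f -> 1 <= cf f.
Proof. intros H; pose proof (cf_bounds f (posn_pos1 _ H)); pose proof (INR_ge1 _ (H O)); lra. Qed.

Lemma zero_small z C : (forall n, Rabs z <= C * (/2)^n) -> z = 0.
Proof.
  intros H. destruct (Req_dec z 0); auto. exfalso.
  assert (Hz : 0 < Rabs z) by (apply Rabs_pos_lt; auto).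
  assert (HC : 0 < C). { specialize (H O). simpl in H. lra. }
  destruct (half_pow_small (Rabs z / C)) as [N HN]. apply Rdiv_lt_0_compat; lra.
  specialize (HN N (le_n _)). specialize (H N).
  assert (C * (/2)^N < Rabs z). { apply Rmult_lt_compat_l with (r := C) in HN; auto.
    field_simplify in HN; lra. }
  lra.
Qed.

Lemma inv_lip a b : 1 <= a -> 1 <= b -> Rabs (/a - /b) <= Rabs (a - b).
Proof.
  intros Ha Hb. replace (/a - /b) with ((b - a) * / (a * b)) by (field; lra).
  rewrite Rabs_mult, Rabs_minus_sym, (Rabs_pos_eq (/ _)).
  2: { apply Rlt_le; apply Rinv_0_lt_compat; nra. }
  assert (/ (a*b) <= 1). { rewrite <- Rinv_1. apply Rinv_le_contravar; nra. }
  pose proof (Rabs_pos (a - b)). nra.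
Qed.

Lemma cf_rec f : pos1 f -> cf f = INR (f O) + / cf (fun k => f (S k)).
Proof.
  intros Hf. apply Rminus_diag_uniq. apply (zero_small _ 3). intros n.
  pose proof (cf_approx f (S n) Hf) as H1.
  pose proof (pos1_tl f Hf) as Ht.
  pose proof (cf_approx _ n (posn_pos1 _ Ht)) as H2.
  pose proof (inv_lip (cf_fin n (fun k => f (S k))) (cf (fun k => f (S k)))
     (cf_fin_ge1 _ _ Ht) (cf_ge1 _ Ht)) as H3.
  change (cf_fin (S n) f) with (INR (f O) + / cf_fin n (fun k => f (S k))) in H1.
  rewrite Rabs_minus_sym in H2. simpl pow in H1.
  set (a := cf f) in *. set (b := cf (fun k => f (S k))) in *.
  set (c := cf_fin n (fun k => f (S k))) in *.
  replace (a - (INR (f O) + / b)) with ((a - (INR (f O) + / c)) + (/c - /b)) by ring.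
  eapply Rle_trans. apply Rabs_triang. lra.
Qed.

Lemma cf_ext f g : (forall k, f k = g k) -> cf f = cf g.
Proof. intros H; f_equal; apply functional_extensionality; auto. Qed.

Lemma cf0_eq g : posn g -> cf0 g = / cf g.
Proof.
  intros Hg. unfold cf0. rewrite cf_rec. simpl. rewrite Rplus_0_l. reflexivity.
  intros [|i] Hi. lia. apply Hg.
Qed.

Lemma cf_fin_ext : forall n f g, (forall i, (i <= n)%nat -> f i = g i) -> cf_fin n f = cf_fin n g.
Proof.
  induction n; intros f g H; simpl. rewrite H; auto.
  rewrite H by lia. f_equal. f_equal. apply IHn. intros; apply H; lia.
Qed.

Lemma invcf_close f g n : posn f -> posn g -> (forall i, (i < n)%nat -> f i = g i) ->
  Rabs (/ cf f - / cf g) <= 8 * (/2)^n.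
Proof.
  intros Hf Hg H. pose proof (cf_ge1 f Hf). pose proof (cf_ge1 g Hg).
  destruct n as [|n].
  - simpl. assert (0 < /cf f <= 1 /\ 0 < /cf g <= 1).
    { split; split; try (apply Rinv_0_lt_compat; lra); rewrite <- Rinv_1; apply Rinv_le_contravar; lra. }
    apply Rabs_le; lra.
  - eapply Rle_trans. apply inv_lip; auto.
    pose proof (cf_approx f n (posn_pos1 _ Hf)). pose proof (cf_approx g n (posn_pos1 _ Hg)).
    rewrite (cf_fin_ext n f g) in H2 by (intros; apply H; lia).
    apply Rabs_le_between in H2. apply Rabs_le_between in H3. apply Rabs_le. simpl pow. lra.
Qed.
Lemma lam_sym a : pos_seq a -> lambda0 a =
  INR (a 0%Z) + / cf (fun k => a (Z.of_nat (S k))) + / cf (fun k => a (- Z.of_nat (S k))%Z).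
Proof.
  intros Ha. unfold lambda0. rewrite cf_rec by (intros i _; apply Ha).
  rewrite cf0_eq by (intros i; apply Ha). reflexivity.
Qed.

Lemma lam_close a b w : pos_seq a -> pos_seq b ->
  (forall i, (Z.abs i <= Z.of_nat w)%Z -> a i = b i) ->
  Rabs (lambda0 a - lambda0 b) <= 16 * (/2)^w.
Proof.
  intros Ha Hb H. rewrite !lam_sym by auto.
  rewrite (H 0%Z) by lia.
  pose proof (invcf_close (fun k => a (Z.of_nat (S k))) (fun k => b (Z.of_nat (S k))) w
    (fun i => Ha _) (fun i => Hb _) ltac:(intros i Hi; apply H; lia)) as H1.
  pose proof (invcf_close (fun k => a (- Z.of_nat (S k))%Z) (fun k => b (- Z.of_nat (S k))%Z) w
    (fun i => Ha _) (fun i => Hb _) ltac:(intros i Hi; apply H; lia)) as H2.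
  apply Rabs_le_between in H1. apply Rabs_le_between in H2. apply Rabs_le. lra.
Qed.

Lemma transpose_pos a : pos_seq a -> pos_seq (transpose a).
Proof. intros H n; apply H. Qed.

Lemma lam_transpose a : pos_seq a -> lambda0 (transpose a) = lambda0 a.
Proof.
  intros Ha. rewrite !lam_sym by auto using transpose_pos. unfold transpose.
  assert (E : cf (fun k => a (- - Z.of_nat (S k))%Z) = cf (fun k => a (Z.of_nat (S k)))).
  { apply cf_ext; intros; rewrite Z.opp_involutive; auto. }
  rewrite E. simpl Z.opp. ring.
Qed.

Lemma shift_transpose q a : shiftn q (transpose a) = transpose (shiftn (- q) a).
Proof. apply functional_extensionality; intro k; unfold shiftn, transpose; f_equal; lia. Qed.

Lemma shiftn_pos q a : pos_seq a -> pos_seq (shiftn q a).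
Proof. intros H n; apply H. Qed.

Lemma markov_transpose a : pos_seq a -> markov (transpose a) = markov a.
Proof.
  intros Ha. unfold markov. apply Lub_Rbar_eqset. intros r; split; intros [n Hn]; subst.
  - exists (- n)%Z. rewrite shift_transpose, lam_transpose; auto using shiftn_pos.
  - exists (- n)%Z. rewrite shift_transpose, lam_transpose, Z.opp_involutive; auto using shiftn_pos.
Qed.

Lemma markov_ge a n : Rbar_le (lambda0 (shiftn n a)) (markov a).
Proof. apply (proj1 (Lub_Rbar_correct _)). exists n; auto. Qed.

Lemma cf_strict f : posn f -> INR (f O) < cf f < INR (f O) + 1.
Proof.
  intros Hf. rewrite cf_rec by (apply posn_pos1; auto).
  assert (Ht : posn (fun k => f (S k))) by (intro; apply Hf).
  rewrite (cf_rec (fun k => f (S k))) by (apply posn_pos1; auto).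
  pose proof (cf_ge1 _ (fun i => Hf (S (S i)) : (1 <= (fun k => f (S (S k))) i)%nat)).
  pose proof (INR_ge1 _ (Hf 1%nat)).
  assert (0 < / cf (fun k => f (S (S k))) ) by (apply Rinv_0_lt_compat; lra).
  set (y := INR (f 1%nat) + / cf (fun k => (fun k0 => f (S k0)) (S k))).
  assert (1 < y) by (unfold y; simpl; lra).
  assert (0 < / y < 1). { split. apply Rinv_0_lt_compat; lra. rewrite <- Rinv_1. apply Rinv_lt_contravar; lra. }
  lra.
Qed.

Lemma cf_inj : forall n f g, posn f -> posn g -> cf f = cf g -> f n = g n.
Proof.
  assert (H0 : forall f g, posn f -> posn g -> cf f = cf g -> f O = g O).
  { intros f g Hf Hg E. pose proof (cf_strict f Hf); pose proof (cf_strict g Hg).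
    assert (INR (f O) < INR (g O) + 1) by lra. assert (INR (g O) < INR (f O) + 1) by lra.
    rewrite <- S_INR in *. apply INR_lt in H1. apply INR_lt in H2. lia. }
  induction n; intros f g Hf Hg E. auto.
  apply (IHn (fun k => f (S k)) (fun k => g (S k))); try (intro; auto).
  rewrite cf_rec in E by (apply posn_pos1; auto). rewrite (cf_rec g) in E by (apply posn_pos1; auto).
  rewrite (H0 f g Hf Hg) in E. 2:{ rewrite cf_rec by (apply posn_pos1; auto). rewrite (cf_rec g) by (apply posn_pos1; auto). exact E. }
  apply Rinv_eq_reg. lra.
Qed.
Lemma Sigma_pos A t : Sigma A t -> pos_seq t.
Proof. intros H n; apply (H n). Qed.

Lemma glue_left a k tau u n : (n <= k)%Z -> glue a k tau u n = a n.
Proof. intros H; unfold glue. destruct (Z.leb_spec n k); auto; lia. Qed.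

Lemma glue_right a k tau u n : (k + Z.of_nat (length tau) < n)%Z ->
  glue a k tau u n = u (Z.to_nat (n - k - 1 - Z.of_nat (length tau))).
Proof.
  intros H; unfold glue. destruct (Z.leb_spec n k); try lia.
  destruct (Z.leb_spec (n - k) (Z.of_nat (length tau))); auto; lia.
Qed.

Lemma glue_pos a k tau u : pos_seq a -> List.Forall (fun c => (1 <= c)%nat) tau -> posn u ->
  pos_seq (glue a k tau u).
Proof.
  intros Ha Ht Hu n. unfold glue.
  destruct (Z.leb_spec n k); auto.
  destruct (Z.leb_spec (n - k) (Z.of_nat (length tau))); auto.
  rewrite Forall_forall in Ht. apply Ht. apply nth_In. lia.
Qed.

Lemma SigmaPlus_pos A u : SigmaPlus A u -> posn u.
Proof. intros [t [Ht Hu]] j. rewrite Hu. apply (Ht _). Qed.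

Lemma pos_level B (m : R) gamma : pos_seq gamma -> markov gamma = Finite m ->
  connects_pos gamma B -> forall k : nat, exists P t D,
  pos_seq P /\ Sigma B t /\ (Z.of_nat k <= D)%Z /\ (forall n, (n <= Z.of_nat k)%Z -> P n = gamma n) /\
  (forall n, (D < n)%Z -> P n = t (n - D)%Z) /\ (forall q, lambda0 (shiftn q P) <= m + / 2 ^ k).
Proof.
  intros Hg Hm Hc k. destruct (Hc k) as [tau [u [Hf [Hu Hmk]]]].
  pose proof (SigmaPlus_pos _ _ Hu) as Hup.
  destruct Hu as [t [Ht Hu]].
  exists (glue gamma (Z.of_nat k) tau u), t, (Z.of_nat k + Z.of_nat (length tau))%Z.
  split; [apply glue_pos; auto|]. split; auto. split; [lia|].
  split. intros; apply glue_left; auto.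
  split. intros n Hn. rewrite glue_right by lia. rewrite Hu. f_equal.
  rewrite Nat2Z.inj_succ, Z2Nat.id by lia. lia.
  intros q. pose proof (markov_ge (glue gamma (Z.of_nat k) tau u) q) as H.
  rewrite Hm in Hmk. simpl in Hmk.
  destruct (markov (glue gamma (Z.of_nat k) tau u)); simpl in *; try tauto; lra.
Qed.

Lemma neg_level B (m : R) gamma : pos_seq gamma -> markov gamma = Finite m ->
  symmetric B -> connects_neg gamma B -> forall k : nat, exists N r D,
  pos_seq N /\ Sigma B r /\ (Z.of_nat k <= D)%Z /\ (forall n, (- Z.of_nat k <= n)%Z -> N n = gamma n) /\
  (forall n, (n < - D)%Z -> N n = r (n + D)%Z) /\ (forall q, lambda0 (shiftn q N) <= m + / 2 ^ k).
Proof.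
  intros Hg Hm Hsym Hc k. destruct (Hc k) as [tau [u [Hf [Hu Hmk]]]].
  pose proof (SigmaPlus_pos _ _ Hu) as Hup.
  destruct Hu as [t [Ht Hu]].
  set (G := glue (transpose gamma) (Z.of_nat k) tau u).
  assert (HG : pos_seq G) by (apply glue_pos; auto using transpose_pos).
  destruct (proj1 (Hsym (cf0 (fun j => t (Z.of_nat (S j))))) (ex_intro _ t (conj Ht eq_refl)))
    as [r [Hr Er]].
  rewrite !cf0_eq in Er by (intro; apply (Sigma_pos _ _ Hr) || apply (Sigma_pos _ _ Ht)).
  apply Rinv_eq_reg in Er.
  assert (Etr : forall j, t (Z.of_nat (S j)) = r (- Z.of_nat (S j))%Z).
  { intro j. apply (cf_inj j (fun j => t (Z.of_nat (S j))) (fun j => r (- Z.of_nat (S j))%Z)); auto;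
    intro; apply (Sigma_pos _ _ Ht) || apply (Sigma_pos _ _ Hr). }
  exists (transpose G), r, (Z.of_nat k + Z.of_nat (length tau))%Z.
  split; [apply transpose_pos; auto|]. split; auto. split; [lia|].
  split. intros n Hn. unfold transpose at 1, G. rewrite glue_left by lia.
  unfold transpose; f_equal; lia.
  split. intros n Hn. unfold transpose at 1, G. rewrite glue_right by lia. rewrite Hu, Etr. f_equal.
  rewrite Nat2Z.inj_succ, Z2Nat.id by lia. lia.
  intros q. rewrite shift_transpose, lam_transpose by auto using shiftn_pos.
  pose proof (markov_ge G (- q)%Z) as H.
  rewrite markov_transpose, Hm in Hmk by auto. simpl in Hmk. fold G in Hmk.
  destruct (markov G); simpl in *; try tauto; lra.
Qed.

Lemma choice_fun {A B} (P : A -> B -> Prop) : (forall a, exists b, P a b) -> exists f, forall a, P a (f a).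
Proof.
  intros H. exists (fun a => proj1_sig (constructive_indefinite_description _ (H a))).
  intro a. exact (proj2_sig (constructive_indefinite_description _ (H a))).
Qed.

Lemma choice3 {A B1 B2 B3} (P : A -> B1 -> B2 -> B3 -> Prop) :
  (forall a, exists b1 b2 b3, P a b1 b2 b3) -> exists f1 f2 f3, forall a, P a (f1 a) (f2 a) (f3 a).
Proof.
  intros H. destruct (choice_fun (fun a (b : B1 * B2 * B3) => P a (fst (fst b)) (snd (fst b)) (snd b))) as [f Hf].
  intros a. destruct (H a) as [b1 [b2 [b3 Hb]]]. exists (b1, b2, b3). exact Hb.
  exists (fun a => fst (fst (f a))), (fun a => snd (fst (f a))), (fun a => snd (f a)). exact Hf.
Qed.
Definition in_seg (c : nat -> Z) (j : nat) (l : Z) := (l < c (S j))%Z /\ (j = O \/ (c j <= l)%Z).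

Section Chain.
Lemma c_mono (c : nat -> Z) : (forall j, (c j < c (S j))%Z) -> forall j j', (j <= j')%nat -> (c j + Z.of_nat (j' - j) <= c j')%Z.
Proof.
  intros Hc j j' H. induction H. rewrite Nat.sub_diag; lia.
  specialize (Hc m). replace (S m - j)%nat with (S (m - j)) by lia. lia.
Qed.
End Chain.

Lemma seg_exists (c : nat -> Z) : (forall j, (c j < c (S j))%Z) -> forall l, exists j, in_seg c j l.
Proof.
  intros Hc l.
  assert (forall J, (l < c (S J))%Z -> exists j, in_seg c j l).
  { induction J; intros H. exists O; split; auto.
    destruct (Z_lt_le_dec l (c (S J))). apply IHJ; auto.
    exists (S J); split; auto. }
  apply (H (Z.to_nat (l - c O))). pose proof (c_mono c Hc O (S (Z.to_nat (l - c O))) ltac:(lia)). lia.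
Qed.

Lemma seg_unique c j j' l : (forall j, (c j < c (S j))%Z) -> in_seg c j l -> in_seg c j' l -> j = j'.
Proof.
  intros Hc [H1 H2] [H1' H2'].
  destruct (Nat.lt_trichotomy j j') as [H|[H|H]]; auto.
  - pose proof (c_mono c Hc (S j) j' H). destruct H2'; lia.
  - pose proof (c_mono c Hc (S j') j H). destruct H2; lia.
Qed.

Lemma seg_large c j J l : (forall j, (c j < c (S j))%Z) -> in_seg c j l -> (c J <= l)%Z -> (J <= j)%nat.
Proof.
  intros Hc [H1 H2] H. destruct (le_lt_dec J j); auto.
  pose proof (c_mono c Hc (S j) J l0). lia.
Qed.

Lemma chain_exists (Sq : nat -> bseq) (o c : nat -> Z) (W : nat -> nat) :
  (forall j, (c j + Z.of_nat (W j) < c (S j))%Z) ->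
  (forall j, (W j <= W (S j))%nat) ->
  (forall j l, (c (S j) - Z.of_nat (W j) <= l <= c (S j) + Z.of_nat (W j))%Z ->
     Sq j (l - o j)%Z = Sq (S j) (l - o (S j))%Z) ->
  exists alpha : bseq, (forall l, exists j, in_seg c j l /\ alpha l = Sq j (l - o j)%Z) /\
    (forall j l, in_seg c j l -> forall d, (Z.abs d <= Z.of_nat (W (pred j)))%Z ->
        alpha (l + d)%Z = Sq j (l + d - o j)%Z).
Proof.
  intros Hc HW Hov.
  assert (Hc1 : forall j, (c j < c (S j))%Z) by (intro j; specialize (Hc j); lia).
  destruct (choice_fun (fun l j => in_seg c j l) (seg_exists c Hc1)) as [seg Hseg].
  exists (fun l => Sq (seg l) (l - o (seg l))%Z). split.
  - intros l; exists (seg l); auto.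
  - intros j l Hj d Hd. set (lp := (l + d)%Z). assert (Hl : lp = (l + d)%Z) by reflexivity. clearbody lp.
    assert (E : forall j', in_seg c j' lp -> seg lp = j') by (intros; eapply seg_unique; eauto).
    destruct Hj as [Hj1 Hj2].
    destruct (Z_lt_le_dec lp (c (S j))) as [Hlt|Hge].
    + destruct Hj2 as [Hj0|Hj2].
      * subst j. rewrite (E O) by (split; auto). auto.
      * destruct (Z_lt_le_dec lp (c j)) as [Hlt'|Hge'].
        2:{ rewrite (E j) by (split; auto). auto. }
        destruct j as [|j0]. { rewrite (E O) by (split; auto). auto. } simpl in Hd.
        assert (Hin : in_seg c j0 lp).
        { split. auto. specialize (Hc j0). lia. }
        rewrite (E j0 Hin). apply Hov. specialize (Hc j0). lia.
    + assert (Hin : in_seg c (S j) lp).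
      { split. specialize (Hc (S j)). pose proof (HW j). assert (W (pred j) <= W j)%nat by (destruct j; simpl; [lia| apply HW]). lia.
        right; auto. }
      rewrite (E (S j) Hin). symmetry. apply Hov.
      assert (W (pred j) <= W j)%nat by (destruct j; simpl; [lia| apply HW]). lia.
Qed.
Fixpoint dm3 (j : nat) : nat * nat :=
  match j with O => (O, O) | S j' => let (k, r) := dm3 j' in if Nat.eqb r 2 then (S k, O) else (k, S r) end.

Lemma dm3_spec j : (j = 3 * fst (dm3 j) + snd (dm3 j))%nat /\ (snd (dm3 j) < 3)%nat.
Proof.
  induction j; simpl. lia. destruct (dm3 j) as [k r]; simpl in *.
  destruct (Nat.eqb_spec r 2); simpl; lia.
Qed.

Lemma dm3_eq k r : (r < 3)%nat -> dm3 (3 * k + r) = (k, r).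
Proof.
  intros H. pose proof (dm3_spec (3*k+r)). destruct (dm3 (3*k+r)) as [k' r']; simpl in *. f_equal; lia.
Qed.

Definition lift3 {X} (f : nat -> nat -> X) (j : nat) : X := f (fst (dm3 j)) (snd (dm3 j)).

Lemma lift3_eq {X} (f : nat -> nat -> X) k r : (r < 3)%nat -> lift3 f (3 * k + r) = f k r.
Proof. intros H; unfold lift3; rewrite dm3_eq; auto. Qed.

Lemma dm3_cases (Q : nat -> Prop) : (forall k, Q (3*k+0)%nat) -> (forall k, Q (3*k+1)%nat) ->
  (forall k, Q (3*k+2)%nat) -> forall j, Q j.
Proof.
  intros H0 H1 H2 j. destruct (dm3_spec j) as [Hj Hr]. rewrite Hj.
  destruct (snd (dm3 j)) as [|[|[|]]]; auto. lia.
Qed.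

Fixpoint Epos (D p D' : nat -> Z) (k : nat) : Z :=
  match k with O => 0%Z | S k' => (Epos D p D' k' + D k' + p k' + D' (S k'))%Z end.

Lemma Epos_ge D p D' : (forall k, 0 <= D k)%Z -> (forall k, 0 < p k)%Z -> (forall k, 0 <= D' k)%Z ->
  forall k, (Z.of_nat k <= Epos D p D' k)%Z.
Proof.
  intros H1 H2 H3 k; induction k; simpl. lia.
  specialize (H1 k); specialize (H2 k); specialize (H3 (S k)). lia.
Qed.

Lemma choice2 {A B1 B2} (P : A -> B1 -> B2 -> Prop) :
  (forall a, exists b1 b2, P a b1 b2) -> exists f1 f2, forall a, P a (f1 a) (f2 a).
Proof.
  intros H. destruct (choice_fun (fun a (b : B1 * B2) => P a (fst b) (snd b))) as [f Hf].
  intros a. destruct (H a) as [b1 [b2 Hb]]. exists (b1, b2). exact Hb.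
  exists (fun a => fst (f a)), (fun a => snd (f a)). exact Hf.
Qed.

Lemma inv_pow2 k : / 2 ^ k = (/2) ^ k.
Proof. rewrite pow_inv; auto. Qed.

Lemma W_mono (W : nat -> nat) : (forall j, (W j <= W (S j))%nat) -> forall j j', (j <= j')%nat -> (W j <= W j')%nat.
Proof. intros H j j' Hj; induction Hj; auto. specialize (H m); lia. Qed.
Theorem lemma3p4 (B C : SFT) (x m : R) (gamma : bseq) :
  (forall t, Sigma B t -> Sigma C t) ->
  transitive B -> symmetric B -> transitive C -> symmetric C ->
  (forall beta, Sigma B beta -> Rbar_le (markov beta) (Finite x)) ->
  Sigma C gamma ->
  markov gamma = Finite m -> lambda0 gamma = m -> x < m ->
  connects_pos gamma B -> connects_neg gamma B ->
  Lspec m.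
Proof.
  intros HBC HtrB HsymB HtrC HsymC HB Hg Hm Hl Hxm Hpos Hneg.
  pose proof (Sigma_pos _ _ Hg) as Hgp.
  destruct (choice3 _ (pos_level B m gamma Hgp Hm Hpos)) as [P [t [D HP]]].
  destruct (choice3 _ (neg_level B m gamma Hgp Hm HsymB Hneg)) as [N [r [D' HN]]].
  assert (Hbr : forall k : nat, exists (s : bseq) (p : Z), Sigma B s /\ (2 * Z.of_nat (2 * k + 2) < p)%Z /\
     (forall i, (- Z.of_nat (2*k+2) <= i <= Z.of_nat (2*k+2))%Z -> s i = t k i) /\
     (forall i, (- Z.of_nat (2*k+2) <= i <= Z.of_nat (2*k+2))%Z -> s (i + p)%Z = r (S k) i)).
  { intros k. destruct (HP k) as [_ [Ht _]]. destruct (HN (S k)) as [_ [Hr _]].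
    destruct (HtrB (t k) (r (S k)) Ht Hr (2*k+2)%nat) as [s [p Hs]]. exists s, p; exact Hs. }
  destruct (choice2 _ Hbr) as [s [p Hs]].
  assert (HsB : forall k q, lambda0 (shiftn q (s k)) <= m + / 2 ^ k).
  { intros k q. destruct (Hs k) as [HsS _]. pose proof (HB _ HsS) as H1.
    pose proof (markov_ge (s k) q) as H2. pose proof (Rbar_le_trans _ _ _ H2 H1) as H3. simpl in H3.
    assert (0 < / 2 ^ k) by (apply Rinv_0_lt_compat; apply pow_lt; lra). lra. }
  set (E := Epos D p D').
  assert (HE : forall k, (Z.of_nat k <= E k)%Z).
  { apply Epos_ge; intro k. destruct (HP k) as [_ [_ [H _]]]; lia.
    destruct (Hs k) as [_ [H _]]; lia. destruct (HN k) as [_ [_ [H _]]]; lia. }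
  set (SqL := fun k (rr : nat) => match rr with O => N k | 1%nat => P k | _ => s k end).
  set (cL := fun k (rr : nat) => match rr with O => (E k - D' k - Z.of_nat (k+1))%Z | 1%nat => E k
                                  | _ => (E k + D k + Z.of_nat (k+1))%Z end).
  set (oL := fun k (rr : nat) => match rr with O => E k | 1%nat => E k | _ => (E k + D k)%Z end).
  set (WL := fun (k rr : nat) => k).
  assert (HS3 : forall k, S (3 * k + 2) = (3 * S k + 0)%nat) by (intro; lia).
  assert (HS1 : forall k, S (3 * k + 0) = (3 * k + 1)%nat) by (intro; lia).
  assert (HS2 : forall k, S (3 * k + 1) = (3 * k + 2)%nat) by (intro; lia).
  assert (HEs : forall k, E (S k) = (E k + D k + p k + D' (S k))%Z) by reflexivity.
  assert (Hc : forall j, (lift3 cL j + Z.of_nat (lift3 WL j) < lift3 cL (S j))%Z).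
  { match goal with |- forall j, @?Q j => apply (dm3_cases Q) end; intro k; [rewrite HS1|rewrite HS2|rewrite HS3];
      rewrite !lift3_eq by lia; cbv beta iota zeta delta [SqL cL oL WL].
    + destruct (HN k) as [_ [_ [H _]]]. lia.
    + destruct (HP k) as [_ [_ [H _]]]. lia.
    + rewrite HEs. destruct (Hs k) as [_ [H _]]. lia. }
  assert (HW : forall j, (lift3 WL j <= lift3 WL (S j))%nat).
  { match goal with |- forall j, @?Q j => apply (dm3_cases Q) end; intro k; [rewrite HS1|rewrite HS2|rewrite HS3];
      rewrite !lift3_eq by lia; cbv beta iota zeta delta [SqL cL oL WL]; lia. }
  assert (Hov : forall j l, (lift3 cL (S j) - Z.of_nat (lift3 WL j) <= l <= lift3 cL (S j) + Z.of_nat (lift3 WL j))%Z ->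
     lift3 SqL j (l - lift3 oL j)%Z = lift3 SqL (S j) (l - lift3 oL (S j))%Z).
  { match goal with |- forall j, @?Q j => apply (dm3_cases Q) end; intros k l Hl'; [rewrite HS1 in *|rewrite HS2 in *|rewrite HS3 in *];
      rewrite !lift3_eq in * by lia; cbv beta iota zeta delta [SqL cL oL WL] in *.
    + destruct (HN k) as [_ [_ [_ [H1 _]]]]. destruct (HP k) as [_ [_ [_ [H2 _]]]].
      rewrite H1 by lia. rewrite H2 by lia. auto.
    + destruct (HP k) as [_ [_ [_ [_ [H1 _]]]]]. destruct (Hs k) as [_ [_ [H2 _]]].
      rewrite H1 by lia. rewrite H2 by lia. f_equal; lia.
    + rewrite HEs in *. destruct (HN (S k)) as [_ [_ [_ [_ [H1 _]]]]]. destruct (Hs k) as [_ [_ [_ H2]]].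
      rewrite H1 by lia. rewrite <- H2 by lia. f_equal; lia. }
  destruct (chain_exists (lift3 SqL) (lift3 oL) (lift3 cL) (lift3 WL) Hc HW Hov) as [alpha [A1 A2]].
  assert (Hc1 : forall j, (lift3 cL j < lift3 cL (S j))%Z) by (intro j; specialize (Hc j); lia).
  assert (HSpos : forall j, pos_seq (lift3 SqL j)).
  { intro j. unfold lift3. destruct (dm3_spec j) as [_ Hr]. revert Hr.
    destruct (snd (dm3 j)) as [|[|[|]]]; intro Hr; cbv beta iota zeta delta [SqL].
    apply (HN _). apply (HP _). apply (Sigma_pos _ _ (proj1 (Hs _))). lia. }
  assert (HSbnd : forall j q, lambda0 (shiftn q (lift3 SqL j)) <= m + (/2) ^ (lift3 WL j)).
  { intros j q. unfold lift3. destruct (dm3_spec j) as [_ Hr]. revert Hr.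
    destruct (snd (dm3 j)) as [|[|[|]]]; intro Hr; cbv beta iota zeta delta [SqL WL]; rewrite <- inv_pow2.
    apply (HN _). apply (HP _). apply HsB. lia. }
  assert (Hapos : pos_seq alpha).
  { intro l. destruct (A1 l) as [j [_ E1]]. rewrite E1. apply HSpos. }
  assert (HWk : forall k rr, (rr < 3)%nat -> lift3 WL (3 * k + rr) = k).
  { intros k rr Hr. rewrite lift3_eq by auto. reflexivity. }
  exists alpha. split; auto. unfold lagrange. apply is_LimSup_seq_unique. intro eps. split.
  - intros N0. destruct (half_pow_small (eps/16)) as [k0 Hk0]. destruct eps; simpl; lra.
    set (k := Nat.max N0 k0). exists (Z.to_nat (E k)). pose proof (HE k).
    split. lia.
    rewrite Z2Nat.id by lia.
    assert (Hin : in_seg (lift3 cL) (3 * k + 1) (E k)).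
    { unfold in_seg. rewrite HS2. rewrite !lift3_eq by lia. cbv beta iota zeta delta [cL].
      destruct (HP k) as [_ [_ [H1 _]]]. split. lia. right; lia. }
    assert (Hag : forall i, (Z.abs i <= Z.of_nat k)%Z -> shiftn (E k) alpha i = gamma i).
    { intros i Hi. unfold shiftn. rewrite Z.add_comm. rewrite (A2 _ _ Hin i).
      rewrite lift3_eq by lia. rewrite lift3_eq by lia. cbv beta iota zeta delta [SqL oL].
      destruct (HP k) as [_ [_ [_ [H1 _]]]]. rewrite H1 by lia. f_equal; lia.
      replace (pred (3 * k + 1)) with (3 * k + 0)%nat by lia. rewrite HWk by lia. auto. }
    pose proof (lam_close (shiftn (E k) alpha) gamma k (shiftn_pos _ _ Hapos) Hgp Hag) as H1.
    rewrite Hl in H1. apply Rabs_le_between in H1.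
    specialize (Hk0 k ltac:(lia)). simpl. lra.
  - destruct (half_pow_small (eps/17)) as [k0 Hk0]. destruct eps; simpl; lra.
    specialize (Hk0 k0 (le_n _)).
    exists (Z.to_nat (lift3 cL (3 * S k0 + 0))). intros n Hn.
    destruct (A1 (Z.of_nat n)) as [j [Hj E1]].
    assert (Hjl : (3 * S k0 + 0 <= j)%nat) by (apply (seg_large _ _ _ (Z.of_nat n) Hc1 Hj); lia).
    assert (Hw : (k0 <= lift3 WL (pred j))%nat).
    { rewrite <- (HWk k0 2%nat) by lia. apply W_mono; auto. lia. }
    assert (Hw' : (lift3 WL (pred j) <= lift3 WL j)%nat) by (apply W_mono; auto; lia).
    assert (Hag : forall i, (Z.abs i <= Z.of_nat (lift3 WL (pred j)))%Z ->
      shiftn (Z.of_nat n) alpha i = shiftn (Z.of_nat n - lift3 oL j) (lift3 SqL j) i).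
    { intros i Hi. unfold shiftn. rewrite Z.add_comm. rewrite (A2 _ _ Hj i Hi). f_equal; lia. }
    pose proof (lam_close _ _ _ (shiftn_pos _ _ Hapos) (shiftn_pos _ _ (HSpos j)) Hag) as H1.
    apply Rabs_le_between in H1.
    pose proof (HSbnd j (Z.of_nat n - lift3 oL j)%Z) as H2.
    pose proof (half_pow_decr _ _ Hw). pose proof (half_pow_decr _ _ (Nat.le_trans _ _ _ Hw Hw')).
    simpl. lra.
Qed.
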